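(* Let $\mathbf{C}$ be the Cantor set, let $X \subset \mathbf{C}$, and let $f : X \to Y$ be a function from $X$ onto a separable metrizable space $Y$. Assume that $f$ is clopen-LC, and that $f^{-1}(y)$ is compact for every $y \in Y$. Then there are subsets $Y_0, Y_1, Y_2, \dots$ of $Y$ with $Y = \bigcup_{n \ge 0} Y_n$ such that: - for every $n \ge 1$, the restriction $f|_{f^{-1}(Y_n)} : f^{-1}(Y_n) \to Y_n$ is an open function; - the restriction $f|_{f^{-1}(Y_0)} : f^{-1}(Y_0) \to Y_0$ is a closed function.
   Context: All spaces are separable metrizable. A subset of a topological space is an LC-set (locally closed set) if it is the intersection of an open set and a closed set. A function $f$ (not necessarily continuous) is open (resp. closed) if it maps open (resp. closed) sets to open (resp. closed) sets of its image space. A function $f : X \to Y$ is clopen-LC if for every subset $U \subset X$ that is clopen in $X$, the image $f(U)$ is an LC-set in $Y$. *)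

(* Defs.v *)
From Stdlib Require Import Reals List.
Open Scope R_scope.

Definition set (T : Type) := T -> Prop.

(* The Cantor set, realized as the Cantor space 2^N with the product topology
   (homeomorphic to the middle-thirds Cantor set). *)
Definition Cantor := nat -> bool.

Definition agree (n : nat) (a b : Cantor) : Prop :=
  forall i, (i < n)%nat -> a i = b i.

Definition cantor_open (U : set Cantor) : Prop :=
  forall x, U x -> exists n, forall y, agree n x y -> U y.

Record MetricSpace := {
  carrier :> Type;
  dist : carrier -> carrier -> R;
  dist_nonneg : forall x y, 0 <= dist x y;
  dist_eq0 : forall x y, dist x y = 0 <-> x = y;
  dist_sym : forall x y, dist x y = dist y x;
  dist_tri : forall x y z, dist x z <= dist x y + dist y z
}.

Definition metric_open (Y : MetricSpace) (U : set Y) : Prop :=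
  forall y, U y -> exists eps, 0 < eps /\ forall z, dist Y y z < eps -> U z.

Definition separable (Y : MetricSpace) : Prop :=
  exists s : nat -> Y, forall y eps, 0 < eps -> exists n, dist Y y (s n) < eps.

Definition top_closed {T} (op : set T -> Prop) (F : set T) : Prop :=
  op (fun x => ~ F x).

Definition rel_open {T} (op : set T -> Prop) (A U : set T) : Prop :=
  (forall x, U x -> A x) /\
  exists V, op V /\ forall x, A x -> (U x <-> V x).

Definition rel_closed {T} (op : set T -> Prop) (A F : set T) : Prop :=
  (forall x, F x -> A x) /\
  exists C, top_closed op C /\ forall x, A x -> (F x <-> C x).

Definition rel_clopen {T} (op : set T -> Prop) (A U : set T) : Prop :=
  rel_open op A U /\ rel_closed op A U.

Definition LC_set {T} (op : set T -> Prop) (S : set T) : Prop :=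
  exists U F, op U /\ top_closed op F /\ forall x, S x <-> (U x /\ F x).

Definition top_compact {T} (op : set T -> Prop) (K : set T) : Prop :=
  forall (I : Type) (V : I -> set T),
    (forall i, op (V i)) ->
    (forall x, K x -> exists i, V i x) ->
    exists l : list I, forall x, K x -> exists i, In i l /\ V i x.

Definition img {A B} (f : A -> B) (U : set A) : set B :=
  fun y => exists x, U x /\ f x = y.

Definition preim {A B} (X : set A) (f : A -> B) (S : set B) : set A :=
  fun x => X x /\ S (f x).

(* Main.v *)
Require Import Defs.
From Stdlib Require Import Reals List.
From Stdlib Require Import Classical ClassicalEpsilon Lia Cantor.

Fixpoint encl {A} (g : A -> nat) (l : list A) : nat :=
  match l with nil => 0%nat | a :: l => S (Cantor.to_nat (g a, encl g l)) end.

Lemma encl_inj {A} (g : A -> nat) : (forall a b, g a = g b -> a = b) ->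
  forall l1 l2, encl g l1 = encl g l2 -> l1 = l2.
Proof.
  intros Hg l1; induction l1 as [|a l1 IH]; intros [|b l2] H; try discriminate; auto.
  assert (H' : Cantor.to_nat (g a, encl g l1) = Cantor.to_nat (g b, encl g l2))
    by (change (S (Cantor.to_nat (g a, encl g l1)) = S (Cantor.to_nat (g b, encl g l2))) in H; congruence).
  clear H; rename H' into H.
  apply (f_equal Cantor.of_nat) in H. rewrite !Cantor.cancel_of_to in H.
  injection H as H1 H2. f_equal; auto.
Qed.

Definition b2n (b : bool) : nat := if b then 1%nat else 0%nat.
Lemma b2n_inj : forall a b, b2n a = b2n b -> a = b.
Proof. intros [|] [|]; simpl; congruence. Qed.

Definition enc (L : list (list bool)) : nat := encl (encl b2n) L.
Lemma enc_inj : forall L1 L2, enc L1 = enc L2 -> L1 = L2.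
Proof. apply encl_inj, encl_inj, b2n_inj. Qed.

Lemma agree_refl n x : agree n x x.
Proof. intros i _; reflexivity. Qed.
Lemma agree_sym n x y : agree n x y -> agree n y x.
Proof. intros H i Hi; symmetry; auto. Qed.
Lemma agree_trans n x y z : agree n x y -> agree n y z -> agree n x z.
Proof. intros H1 H2 i Hi; rewrite H1; auto. Qed.

Definition cyl (w : list bool) (z : Cantor) : Prop :=
  forall i, (i < length w)%nat -> z i = nth i w false.
Definition UL (L : list (list bool)) (z : Cantor) : Prop := exists w, In w L /\ cyl w z.
Definition word (x : Cantor) (n : nat) : list bool := map x (seq 0 n).

Lemma cyl_word x n z : cyl (word x n) z <-> agree n x z.
Proof.
  unfold cyl, word, agree. rewrite length_map, length_seq. split; intros H i Hi.
  - rewrite H by auto. rewrite (nth_indep _ false (x 0%nat)) by (rewrite length_map, length_seq; auto).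
    rewrite map_nth, seq_nth by auto. reflexivity.
  - rewrite (nth_indep _ false (x 0%nat)) by (rewrite length_map, length_seq; auto).
    rewrite map_nth, seq_nth by auto. simpl. symmetry; auto.
Qed.

Fixpoint sumlen (L : list (list bool)) : nat :=
  match L with nil => 0%nat | w :: L => (length w + sumlen L)%nat end.
Lemma sumlen_le L w : In w L -> (length w <= sumlen L)%nat.
Proof. induction L; simpl; intros H; [contradiction|]. destruct H as [H|H]; subst; try lia. specialize (IHL H); lia. Qed.

Lemma open_agree n x : cantor_open (agree n x).
Proof. intros z Hz; exists n; intros y Hy; eapply agree_trans; eauto. Qed.
Lemma open_nagree n x : cantor_open (fun z => ~ ~ agree n x z).
Proof. intros z Hz; apply NNPP in Hz; exists n; intros y Hy N; apply N; eapply agree_trans; eauto. Qed.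
Lemma open_nUL L : cantor_open (fun z => ~ UL L z).
Proof.
  intros z Hz; exists (sumlen L); intros y Hy [w [Hw Hc]]. apply Hz. exists w; split; auto.
  intros i Hi. rewrite Hy. apply Hc; auto. pose proof (sumlen_le L w Hw); lia.
Qed.
Lemma open_nnUL L : cantor_open (fun z => ~ ~ UL L z).
Proof.
  intros z Hz; apply NNPP in Hz. destruct Hz as [w [Hw Hc]]. exists (length w).
  intros y Hy N; apply N; exists w; split; auto. intros i Hi; rewrite <- Hy; auto.
Qed.

Definition Xclopen (X A : set Cantor) : Prop :=
  exists V C, cantor_open V /\ cantor_open (fun z => ~ C z) /\
    forall z, (A z <-> X z /\ V z) /\ (A z <-> X z /\ C z).

Lemma Xclopen_rel X A : Xclopen X A -> rel_clopen cantor_open X A.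
Proof.
  intros [V [C [HV [HC H]]]]. split; split.
  - intros x Hx; apply H in Hx; tauto.
  - exists V; split; auto. intros x Hx; specialize (H x); tauto.
  - intros x Hx; apply H in Hx; tauto.
  - exists C; split; auto. intros x Hx; specialize (H x); tauto.
Qed.

Lemma Xclopen_union X A B : Xclopen X A -> Xclopen X B -> Xclopen X (fun z => A z \/ B z).
Proof.
  intros [V1 [C1 [HV1 [HC1 H1]]]] [V2 [C2 [HV2 [HC2 H2]]]].
  exists (fun z => V1 z \/ V2 z), (fun z => C1 z \/ C2 z). split; [|split].
  - intros z [Hz|Hz]; [destruct (HV1 z Hz) as [n Hn]|destruct (HV2 z Hz) as [n Hn]];
      exists n; intros y Hy; [left|right]; auto.
  - intros z Hz. destruct (HC1 z) as [n1 Hn1]; [tauto|]. destruct (HC2 z) as [n2 Hn2]; [tauto|].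
    exists (n1 + n2)%nat; intros y Hy [Hc|Hc];
      [apply (Hn1 y)|apply (Hn2 y)]; auto; intros i Hi; apply Hy; lia.
  - intros z; specialize (H1 z); specialize (H2 z); tauto.
Qed.

Lemma Xclopen_cyl X n x : Xclopen X (fun z => X z /\ agree n x z).
Proof.
  exists (agree n x), (agree n x). repeat split; try tauto.
  - apply open_agree.
  - intros z Hz. exists n; intros y Hy N; apply Hz. eapply agree_trans; eauto using agree_sym.
Qed.

Definition KC (X : set Cantor) L : set Cantor := fun z => X z /\ ~ UL L z.

Lemma Xclopen_KC X L : Xclopen X (KC X L).
Proof.
  exists (fun z => ~ UL L z), (fun z => ~ UL L z). unfold KC. repeat split; try tauto.
  - apply open_nUL.
  - apply open_nnUL.
Qed.

Definition clo (Y : MetricSpace) (S : set Y) : set Y :=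
  fun w => forall F', top_closed (metric_open Y) F' -> (forall v, S v -> F' v) -> F' w.

Lemma clo_closed (Y : MetricSpace) (S : set Y) : top_closed (metric_open Y) (clo Y S).
Proof.
  intros w Hw. apply not_all_ex_not in Hw. destruct Hw as [F' Hw].
  apply imply_to_and in Hw; destruct Hw as [HF Hw].
  apply imply_to_and in Hw; destruct Hw as [HS Hw].
  destruct (HF w Hw) as [eps [Heps Hb]]. exists eps; split; auto.
  intros z Hz N. apply (Hb z Hz). apply N; auto.
Qed.

Definition Zset (Y : MetricSpace) (f : Cantor -> Y) (K : set Cantor) : set Y :=
  fun y => clo Y (img f K) y /\ ~ img f K y.

Lemma open_part (X : set Cantor) (Y : MetricSpace) (f : Cantor -> Y) (K : set Cantor) (Z : set Y) :
  (forall U, rel_clopen cantor_open X U -> LC_set (metric_open Y) (img f U)) ->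
  Xclopen X K -> (forall y, Z y -> Zset Y f K y) ->
  forall U, rel_open cantor_open (preim X f Z) U -> rel_open (metric_open Y) Z (img f U).
Proof.
  intros HLC HK HZ U [HU [V [HV HUV]]]. split.
  - intros y [x [Ux fx]]; subst. apply HU in Ux; destruct Ux; auto.
  - exists (fun z => exists W, metric_open Y W /\ W z /\ forall w, W w -> Z w -> img f U w). split.
    + intros z [W [HW [Wz HWi]]]. destruct (HW z Wz) as [eps [Heps Hb]].
      exists eps; split; auto. intros z' Hz'. exists W; repeat split; auto.
    + intros y Zy; split.
      * intros [x [Ux fx]]. pose proof (HU x Ux) as HUx.
        assert (Vx : V x) by (apply (HUV x HUx); auto).
        destruct (HV x Vx) as [n Hn].
        assert (Hcl : Xclopen X (fun z => K z \/ (X z /\ agree n x z)))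
          by (apply Xclopen_union; auto using Xclopen_cyl).
        destruct (HLC _ (Xclopen_rel _ _ Hcl)) as [O [F [HO [HF HOF]]]].
        assert (Hy : O y /\ F y).
        { apply HOF. exists x; split; auto. right; split; [apply HUx|apply agree_refl]. }
        exists O; split; auto; split; [tauto|].
        intros w Ow Zw. destruct (HZ w Zw) as [Hc Hn'].
        assert (Fw : F w).
        { apply Hc; auto. intros v [x' [Kx' fx']]. apply (HOF v). exists x'; split; auto. }
        assert (Hw : img f (fun z => K z \/ (X z /\ agree n x z)) w) by (apply HOF; auto).
        destruct Hw as [x' [[Kx'|[Xx' Ax']] fx']].
        { exfalso; apply Hn'; exists x'; auto. }
        exists x'; split; auto. assert (Hp : preim X f Z x') by (split; auto; rewrite fx'; auto).
        apply (HUV x' Hp). apply Hn; auto.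
      * intros [W [_ [Wy H]]]. apply H; auto.
Qed.

Theorem theorem1 (X : set Cantor) (Y : MetricSpace) (f : Cantor -> Y) :
  separable Y ->
  (forall y : Y, exists x, X x /\ f x = y) ->
  (forall U, rel_clopen cantor_open X U -> LC_set (metric_open Y) (img f U)) ->
  (forall y : Y, @top_compact Cantor cantor_open (preim X f (fun z : Y => z = y))) ->
  exists Ys : nat -> set Y,
    (forall y : Y, exists n, Ys n y) /\
    (forall n, (1 <= n)%nat -> forall U,
        rel_open cantor_open (preim X f (Ys n)) U ->
        rel_open (metric_open Y) (Ys n) (img f U)) /\
    (forall F,
        rel_closed cantor_open (preim X f (Ys 0%nat)) F ->
        rel_closed (metric_open Y) (Ys 0%nat) (img f F)).
Proof.
  intros _ _ HLC Hcomp.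
  set (Zs := fun m y => exists L, enc L = m /\ Zset Y f (KC X L) y).
  exists (fun n => match n with O => fun y => forall m, ~ Zs m y | S m => Zs m end).
  split; [|split].
  - intros y. destruct (classic (exists m, Zs m y)) as [[m Hm]|H].
    + exists (S m); auto.
    + exists O; intros m Hm; apply H; eauto.
  - intros [|m] Hm; [lia|]. intros U HU.
    destruct (classic (exists L, enc L = m)) as [[L HL]|HnL].
    + apply (open_part X Y f (KC X L)); auto using Xclopen_KC.
      intros y [L' [HL' Hz]]. rewrite <- HL in HL'. apply enc_inj in HL'; subst; auto.
    + apply (open_part X Y f (KC X nil)); auto using Xclopen_KC.
      intros y [L' [HL' Hz]]. exfalso; eauto.
  - intros F [HFsub [C [HC HFC]]]. split.
    { intros y [x [Fx fx]]; subst. apply HFsub in Fx; apply Fx. }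
    exists (clo Y (img f F)); split; [apply clo_closed|].
    intros y Y0y; split.
    + intros Hi F' _ HS; apply HS; auto.
    + intros Hcl. apply NNPP; intros Hni.
      set (P := preim X f (fun z : Y => z = y)).
      assert (Hn : forall i : {x | P x}, exists n, forall z, agree n (proj1_sig i) z -> ~ C z).
      { intros [x [Xx fx]]; simpl. apply HC. intros Cx.
        assert (Hp : preim X f (fun y => forall m, ~ Zs m y) x) by (split; auto; rewrite fx; auto).
        apply Hni. exists x; split; auto. apply (HFC x Hp); auto. }
      set (nf := fun i => proj1_sig (constructive_indefinite_description _ (Hn i))).
      assert (Hnf : forall i z, agree (nf i) (proj1_sig i) z -> ~ C z)
        by (intro i; exact (proj2_sig (constructive_indefinite_description _ (Hn i)))).
      destruct (Hcomp y {x | P x} (fun i => agree (nf i) (proj1_sig i))) as [l Hl].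
      { intros i; apply open_agree. }
      { intros x Px. exists (exist _ x Px); apply agree_refl. }
      set (L := map (fun i => word (proj1_sig i) (nf i)) l).
      assert (HUL : forall z, UL L z -> ~ C z).
      { intros z [w [Hw Hc]]. apply in_map_iff in Hw. destruct Hw as [i [Hi _]]; subst.
        apply (proj1 (cyl_word _ _ _)) in Hc. exact (Hnf i z Hc). }
      assert (HP : forall x, P x -> UL L x).
      { intros x Px. destruct (Hl x Px) as [i [Hi Ha]]. exists (word (proj1_sig i) (nf i)).
        split; [apply in_map_iff; eauto|]. apply (proj2 (cyl_word _ _ _)); auto. }
      apply (Y0y (enc L)). exists L; split; auto. split.
      * apply Hcl; [apply clo_closed|]. intros v [x [Fx fx]].
        intros F' _ HS. apply HS. exists x; split; auto. split.
        -- apply HFsub in Fx; apply Fx.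
        -- intros HU. apply (HUL x HU). apply (HFC x); auto.
      * intros [x [[Xx Hx] fx]]. apply Hx, HP. split; auto.
Qed.
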